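(* The iterated symmetric derivatives $\mathbf D_1,\mathbf D_2,\dots$, viewed as commuting linear operators on $\Lambda$, are algebraically independent over $\mathbb C$. That is, for every $r\ge1$ and every nonzero polynomial $P\in\mathbb C[T_1,\dots,T_r]$, the operator $P(\mathbf D_1,\dots,\mathbf D_r)$ is nonzero.
   Context: $\Lambda$ is the algebra of complex symmetric functions in $y_1,y_2,\dots$, with basis the monomial symmetric functions $m_\lambda$. For $i\ge1$, $\mathbf D_i$ is the linear operator with $\mathbf D_im_\lambda=i!\,m_{\lambda\setminus i}$ if $i$ is a part of $\lambda$ (one part $i$ removed), and $\mathbf D_im_\lambda=0$ otherwise. *)

(* Defs.v *)
From HB Require Import structures.
From mathcomp Require Import all_boot all_order all_algebra.
From mathcomp Require Import complex.
From mathcomp Require Import reals.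
From mathcomp Require Import mpoly.

Set Implicit Arguments. Unset Strict Implicit. Unset Printing Implicit Defensive.
Import Order.TTheory GRing.Theory Num.Theory.
Local Open Scope ring_scope.

Definition is_partition (s : seq nat) : bool :=
  sorted geq s && all (fun x => 0 < x)%N s.

Record ipartition := IPartition { pval :> seq nat; pvalP : is_partition pval }.
HB.instance Definition _ := [isSub for pval].
HB.instance Definition _ := [Equality of ipartition by <:].

Lemma addpart_proof (i : nat) (mu : ipartition) :
  is_partition (if (0 < i)%N then sort geq (i :: pval mu) else pval mu).
Proof.
case: ifP => hi; last exact: pvalP.
apply/andP; split.
  apply: sort_sorted => x y; exact: leq_total.
rewrite (perm_all _ (permEl (perm_sort _ _))) /= hi.
by case/andP: (pvalP mu).
Qed.

Definition addpart (i : nat) (mu : ipartition) : ipartition :=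
  IPartition (addpart_proof i mu).

Section SymDer.
Variable C : nzRingType.

(* An element of Lambda is written as sum_lambda f(lambda) m_lambda with
   f : ipartition -> C finitely supported; we work with coefficient functions.
   Since D_i m_lambda = i! m_(lambda \ i), the coefficient of m_mu in D_i f is
   i! * f(mu ∪ {i}). *)
Definition finsupp (f : ipartition -> C) : Prop :=
  exists s : seq ipartition, forall mu, f mu != 0 -> mu \in s.

Definition symD (i : nat) (f : ipartition -> C) : ipartition -> C :=
  fun mu => (i`!)%:R * f (addpart i mu).

(* D_1^(m_1) ... D_r^(m_r) applied to f, for a monomial m in r variables,
   variable T_(k+1) (index k : 'I_r) being sent to D_(k+1). *)
Definition symDmon (r : nat) (m : 'X_{1..r}) (f : ipartition -> C)
  : ipartition -> C :=
  foldr (fun k g => iter (m k) (symD k.+1) g) f (enum 'I_r).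
End SymDer.

Definition symDpoly (C : comNzRingType) (r : nat) (P : {mpoly C[r]})
  (f : ipartition -> C) : ipartition -> C :=
  fun mu => \sum_(m <- msupp P) P@_m * symDmon m f mu.

(* Main.v *)
Require Import Defs.
From HB Require Import structures.
From mathcomp Require Import all_boot all_order all_algebra.
From mathcomp Require Import complex.
From mathcomp Require Import reals.
From mathcomp Require Import mpoly.
Local Open Scope ring_scope.
Import GRing.Theory Num.Theory.

Lemma addpart_perm (i : nat) (mu : ipartition) :
  (0 < i)%N -> perm_eq (pval (addpart i mu)) (i :: pval mu).
Proof. by move=> hi; rewrite /= hi perm_sort. Qed.

Lemma count_iter_addpart (j i n : nat) (mu : ipartition) : (0 < i)%N ->
  count_mem j (pval (iter n (addpart i) mu)) = (n * (i == j) + count_mem j (pval mu))%N.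
Proof.
move=> hi; elim: n => [|n IH] //=.
rewrite (permP (addpart_perm _ _ hi)) /= IH mulSn addnA.
by rewrite [(i == j)]eq_sym.
Qed.

Lemma iter_symD (C : nzRingType) (i n : nat) (g : ipartition -> C) mu :
  iter n (symD i) g mu = ((i`! ^ n)%N)%:R * g (iter n (addpart i) mu).
Proof.
elim: n mu => [|n IH] mu /=; first by rewrite mul1r.
rewrite /symD IH -iterSr /= expnSr natrM mulrA.
by rewrite -!natrM mulnC.
Qed.

Definition Af (r : nat) (m : 'X_{1..r}) (s : seq 'I_r) (mu : ipartition) :=
  foldl (fun mu (k : 'I_r) => iter (m k) (addpart k.+1) mu) mu s.
Arguments Af {r}.

Lemma symDmon_foldr (C : nzRingType) (r : nat) (m : 'X_{1..r}) (s : seq 'I_r)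
  (f : ipartition -> C) mu :
  foldr (fun (k : 'I_r) g => iter (m k) (symD k.+1) g) f s mu =
  ((\prod_(k <- s) (k.+1`! ^ m k))%N)%:R * f (Af m s mu).
Proof.
elim: s mu => [|k s IH] mu /=; first by rewrite big_nil mul1r.
rewrite iter_symD IH big_cons natrM mulrA.
by rewrite -!natrM mulnC.
Qed.

Lemma count_Af (r : nat) (m : 'X_{1..r}) (s : seq 'I_r) mu j :
  count_mem j (pval (Af m s mu)) =
  (\sum_(k <- s) m k * (k.+1 == j) + count_mem j (pval mu))%N.
Proof.
elim: s mu => [|k s IH] mu /=; first by rewrite big_nil.
by rewrite IH count_iter_addpart // big_cons addnCA addnA.
Qed.


Definition emptyp : ipartition := @IPartition [::] (erefl true).

Lemma Af_inj (r : nat) (m m' : 'X_{1..r}) :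
  Af m (enum 'I_r) emptyp = Af m' (enum 'I_r) emptyp -> m = m'.
Proof.
move=> E; apply/mnmP => j.
have key : forall mm : 'X_{1..r},
  count_mem j.+1 (pval (Af mm (enum 'I_r) emptyp)) = mm j.
  move=> mm; rewrite count_Af /= addn0 big_enum /=.
  rewrite (bigD1 j) //= eqxx muln1 big1 ?addn0 // => k hk.
  have hk2 : (k : nat) != j by [].
  by rewrite eqSS (negbTE hk2) muln0.
by rewrite -key E key.
Qed.

Theorem mainTheorem8 (R : realType) (r : nat) (P : {mpoly (complex R)[r]}) :
  (1 <= r)%N -> P != 0 ->
  exists f : ipartition -> complex R,
    finsupp f /\ exists mu : ipartition, symDpoly P f mu != 0.
Proof.
move=> _ hP.
have : msupp P != [::] by rewrite msupp_eq0.
case E: (msupp P) => [|m s] // _.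
have hm : m \in msupp P by rewrite E mem_head.
set lam := Af m (enum 'I_r) emptyp.
exists (fun mu => if mu == lam then 1 else 0); split.
  exists [:: lam] => mu /=; case: (mu =P lam) => [-> _|_]; first by rewrite mem_head.
  by rewrite eqxx.
exists emptyp.
rewrite /symDpoly (bigD1_seq m) ?msupp_uniq //=.
rewrite big1 ?addr0; last first.
  move=> i hi; rewrite /symDmon symDmon_foldr.
  case: eqP => [/Af_inj hE|_]; last by rewrite !mulr0.
  by rewrite hE eqxx in hi.
rewrite /symDmon symDmon_foldr eqxx mulr1.
rewrite mulf_neq0 //; first by rewrite mcoeff_eq0 hm.
rewrite pnatr_eq0 -lt0n prodn_gt0 // => k.
by rewrite expn_gt0 fact_gt0.
Qed.
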